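(* Let $g$ be a total recursive function such that, writing $\Phi_i(x,y)$ for the $i$-th $\Sigma^0_2$ formula, $\Phi_i(x,y)$ holds iff $W_{g(i,x,y)}$ is finite. Let $F(i,x,y,s)=\max_{y'\leq y}|W_{g(i,x,y'),s}|$, let $A_i=\{x:\forall y\ \lim_{s\to\infty}F(i,x,y,s)<\infty\}$, and let $$x(i,n,y,s)=\min\{x\in B^n:\forall x'\in B^n\ F(i,x,y,s)\leq F(i,x',y,s)\}.$$ Let $n$ be a natural number and $i$ an index such that $A_i$ is an infinite set with weak apartness and $A_i\cap B^n\neq\emptyset$. Then $\lim_{y\to\infty}\lim_{s\to\infty}x(i,n,y,s)$ exists and equals the unique element of $A_i\cap B^n$.
   Context: $W_e$ denotes the $e$-th recursively enumerable set and $W_{e,s}$ its enumeration up to stage $s$. For $x=\sum_{i=0}^{k}2^{n_i}\in\mathbb{Z}^+$ with $n_0<\cdots<n_k$, set $\mu(x)=n_k$ and $\lambda(x)=n_0$. For each $n$, $B^n=\{x\in\mathbb{Z}^+:\mu(x)=n\}$. A set $A$ has weak apartness if for every natural number $m$, $B^m\cap A$ has at most one element, and for every natural number $l$, there are at most two $x\in A$ with $\lambda(x)=l$. *)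

(* Defs.v *)
From mathcomp Require Import all_boot.
Set Implicit Arguments. Unset Strict Implicit. Unset Printing Implicit Defensive.

(* Binary expansion: for x > 0, mu x = largest exponent, lambda x = smallest. *)
Definition mu (x : nat) : nat := trunc_log 2 x.
Definition lambda (x : nat) : nat := logn 2 x.

Definition Bn (n x : nat) : bool := (0 < x) && (mu x == n).

(* Finite enumeration of B^n in increasing order (B^n is contained in [0, 2^(n+1))). *)
Definition Bn_list (n : nat) : seq nat := [seq x <- iota 0 (2 ^ n.+1) | Bn n x].

(* Weak apartness of a set A of naturals (lambda/mu only on positive elements). *)
Definition weak_apartness (A : nat -> Prop) : Prop :=
  (forall m x x', A x -> A x' -> Bn m x -> Bn m x' -> x = x') /\
  (forall l x1 x2 x3, A x1 -> A x2 -> A x3 -> 0 < x1 -> 0 < x2 -> 0 < x3 ->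
     lambda x1 = l -> lambda x2 = l -> lambda x3 = l ->
     x1 = x2 \/ x1 = x3 \/ x2 = x3).

Definition infinite_set (A : nat -> Prop) : Prop := forall m, exists x, m <= x /\ A x.

(* Ws e s : the finite stage-s approximation W_{e,s} of the e-th r.e. set,
   given as a duplicate-free list; |W_{e,s}| = size (Ws e s). *)

Definition F (Ws : nat -> nat -> seq nat) (g : nat -> nat -> nat -> nat)
  (i x y s : nat) : nat :=
  \max_(y' < y.+1) size (Ws (g i x y') s).

Definition lim_is (u : nat -> nat) (c : nat) : Prop :=
  exists s0, forall s, s0 <= s -> u s = c.

Definition Aset Ws g (i : nat) (x : nat) : Prop :=
  forall y, exists c, lim_is (fun s => F Ws g i x y s) c.

Definition xmin Ws g (i n y s : nat) : nat :=
  let L := Bn_list n in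
  nth 0 L (find (fun x => all (fun x' => F Ws g i x y s <= F Ws g i x' y s) L) L).

(* Main.v *)
Require Import Defs.
From mathcomp Require Import all_boot.
From mathcomp Require Import zify.
From Stdlib Require Import Classical ClassicalEpsilon.
Set Implicit Arguments. Unset Strict Implicit.

Definition ev (P : nat -> Prop) := exists s0, forall s, s0 <= s -> P s.

Lemma ev_and (P Q : nat -> Prop) : ev P -> ev Q -> ev (fun s => P s /\ Q s).
Proof.
move=> [a Ha] [b Hb]; exists (maxn a b) => s Hs; split.
  by apply: Ha; apply: leq_trans Hs; rewrite leq_maxl.
by apply: Hb; apply: leq_trans Hs; rewrite leq_maxr.
Qed.

Lemma ev_mono (P Q : nat -> Prop) : (forall s, P s -> Q s) -> ev P -> ev Q.
Proof. by move=> H [a Ha]; exists a => s Hs; apply: H; apply: Ha. Qed.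

Definition mono (u : nat -> nat) := forall s s', s <= s' -> u s <= u s'.
Definition unb (u : nat -> nat) := forall K, exists s, K < u s.

Lemma unb_ev u K : mono u -> unb u -> ev (fun s => K < u s).
Proof.
move=> Hm Hu; case: (Hu K) => s0 Hs0; exists s0 => s Hs.
exact: leq_trans Hs0 (Hm _ _ Hs).
Qed.

Lemma bounded_lim u : mono u -> forall d s0,
  (forall s, s0 <= s -> u s <= u s0 + d) -> exists c, lim_is u c.
Proof.
move=> Hm; elim=> [|d IH] s0 H.
  exists (u s0), s0 => s Hs; apply/eqP; rewrite eqn_leq (Hm _ _ Hs) andbT.
  by have := H s Hs; rewrite addn0.
case: (classic (exists s1, s0 <= s1 /\ u s0 < u s1)) => [[s1 [Hs1 Hlt]] | Hn].
  apply: (IH s1) => s Hs; have := H s (leq_trans Hs1 Hs); lia.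
apply: (IH s0) => s Hs.
have : ~ (u s0 < u s) by move=> h; apply Hn; exists s.
move/negP; rewrite -leqNgt => h; lia.
Qed.

Lemma dich u : mono u -> (exists c, lim_is u c) \/ unb u.
Proof.
move=> Hm; case: (classic (unb u)) => [h|h]; [by right|left].
have [K HK] : exists K, forall s, u s <= K.
  apply: NNPP => Hc; apply: h => K; apply: NNPP => HK; apply: Hc; exists K => s.
  rewrite leqNgt; apply/negP => hs; apply: HK; by exists s.
apply: (@bounded_lim u Hm (K - u 0) 0) => s _; have := HK s; lia.
Qed.

Lemma lim_ev (u : nat -> nat) c : lim_is u c -> ev (fun s => u s = c).
Proof. by []. Qed.

Lemma C1 u v c d : lim_is u c -> lim_is v d ->
  ev (fun s => (u s <= v s) = (c <= d)).
Proof. by move=> H1 H2; apply: ev_mono (ev_and (lim_ev H1) (lim_ev H2)) => s [-> ->]. Qed.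

Lemma C2 u v c : lim_is u c -> mono v -> unb v ->
  ev (fun s => (u s <= v s) = true).
Proof.
move=> H1 Hm Hu; apply: ev_mono (ev_and (lim_ev H1) (@unb_ev v c Hm Hu)) => s [-> h].
by rewrite ltnW.
Qed.

Lemma C3 u v c : mono u -> unb u -> lim_is v c ->
  ev (fun s => (u s <= v s) = false).
Proof.
move=> Hm Hu H2; apply: ev_mono (ev_and (@unb_ev u c Hm Hu) (lim_ev H2)) => s [h ->].
by rewrite leqNgt h.
Qed.

Lemma ev_all (T : eqType) (p : nat -> T -> bool) L :
  (forall x, x \in L -> exists b, ev (fun s => p s x = b)) ->
  exists b, ev (fun s => all (p s) L = b).
Proof.
elim: L => [|x L IH] H; first by exists true, 0.
case: (H x (mem_head _ _)) => b Hb.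
case: IH => [y Hy|b' Hb']; first by apply: H; rewrite in_cons Hy orbT.
exists (b && b'); apply: ev_mono (ev_and Hb Hb') => s [h1 h2] /=.
by rewrite h1 h2.
Qed.

Lemma ev_find (T : eqType) (p : nat -> T -> bool) L :
  (forall x, x \in L -> exists b, ev (fun s => p s x = b)) ->
  exists k, ev (fun s => find (p s) L = k).
Proof.
elim: L => [|x L IH] H; first by exists 0, 0.
case: (H x (mem_head _ _)) => b Hb.
case: IH => [y Hy|k Hk]; first by apply: H; rewrite in_cons Hy orbT.
exists (if b then 0 else k.+1); apply: ev_mono (ev_and Hb Hk) => s [h1 h2] /=.
by rewrite h1 h2.
Qed.

Lemma ev_find_eq (T : eqType) (p : nat -> T -> bool) q L :
  (forall x, x \in L -> ev (fun s => p s x = q x)) ->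
  ev (fun s => find (p s) L = find q L).
Proof.
elim: L => [|x L IH] H; first by exists 0.
have Hb := H x (mem_head _ _).
have Hk := IH (fun y Hy => H y (@mem_behead _ (x :: L) y Hy)).
by apply: ev_mono (ev_and Hb Hk) => s [h1 h2] /=; rewrite h1 h2.
Qed.

Lemma ev_all_true (T : eqType) (p : nat -> T -> bool) L :
  (forall x, x \in L -> ev (fun s => p s x = true)) ->
  ev (fun s => all (p s) L = true).
Proof.
elim: L => [|x L IH] H; first by exists 0.
have Hb := H x (mem_head _ _).
have Hk := IH (fun y Hy => H y (@mem_behead _ (x :: L) y Hy)).
by apply: ev_mono (ev_and Hb Hk) => s [h1 h2] /=; rewrite h1 h2.
Qed.

Theorem lemma3p4
  (Ws : nat -> nat -> seq nat) (g : nat -> nat -> nat -> nat)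
  (Ws_uniq : forall e s, uniq (Ws e s))
  (Ws_mono : forall e s, {subset Ws e s <= Ws e s.+1})
  (n i : nat)
  (Hinf : infinite_set (Aset Ws g i))
  (Hwa : weak_apartness (Aset Ws g i))
  (Hne : exists x, Aset Ws g i x /\ Bn n x) :
  exists a, [/\ Aset Ws g i a, Bn n a,
    (forall b, Aset Ws g i b -> Bn n b -> b = a) &
    exists l : nat -> nat,
      (forall y, lim_is (fun s => xmin Ws g i n y s) (l y)) /\
      lim_is l a].
Proof.
have size_mono : forall e, mono (fun s => size (Ws e s)).
  move=> e s s'; elim: s' => [|s' IH]; first by rewrite leqn0 => /eqP ->.
  rewrite leq_eqVlt ltnS => /orP [/eqP ->//| /IH h].
  apply: leq_trans h _; apply: uniq_leq_size; [exact: Ws_uniq | exact: Ws_mono].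
have F_mono_s : forall x y, mono (fun s => F Ws g i x y s).
  move=> x y s s' h; rewrite /F; apply/bigmax_leqP => j _.
  apply: leq_trans (size_mono _ _ _ h) _; exact: (leq_bigmax_cond j).
have F_mono_y : forall x y y' s, y <= y' -> F Ws g i x y s <= F Ws g i x y' s.
  move=> x y y' s h; rewrite /F; apply/bigmax_leqP => j _.
  have hj : j < y'.+1 by apply: leq_trans (ltn_ord j) _.
  exact: (leq_bigmax_cond (Ordinal hj)).
case: Hne => a [Ha Han].
set L := Bn_list n.
have HaL : a \in L.
  rewrite mem_filter Han mem_iota /= add0n.
  move/andP: (Han) => [Hpos /eqP Hmu]; rewrite -Hmu /mu; exact: trunc_log_ltn.
exists a; split => //.
  by move=> b Hb Hbn; exact: (Hwa.1 n b a Hb Ha Hbn Han).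
have Hlim : forall y, exists c, lim_is (fun s => xmin Ws g i n y s) c.
  move=> y.
  have Hp : forall x, x \in L -> exists b, ev (fun s =>
      (fun s x => all (fun x' => F Ws g i x y s <= F Ws g i x' y s) L) s x = b).
    move=> x _ /=. case: (dich (F_mono_s x y)) => [[c Hc] | Hu].
      apply: ev_all => x' _. case: (dich (F_mono_s x' y)) => [[d Hd]|Hu'].
        by exists (c <= d); exact: C1.
      by exists true; exact: C2 Hc (F_mono_s _ _) Hu'.
    exists false; case: (Ha y) => c Hc.
    apply: ev_mono (C3 (F_mono_s x y) Hu Hc) => s h.
    by apply/negbTE/allP => /(_ a HaL); rewrite h.
  case: (ev_find Hp) => k [s0 Hk]; exists (nth 0 L k), s0 => s Hs.
  rewrite /xmin; congr (nth _ _ _); exact: (Hk s Hs).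
have [l Hl] : exists l : nat -> nat,
    forall y, lim_is (fun s => xmin Ws g i n y s) (l y).
  exists (fun y => proj1_sig (constructive_indefinite_description _ (Hlim y))).
  move=> y; exact: proj2_sig _.
have [Y HY] : exists Y, forall b, b \in L -> b != a -> forall y, Y <= y ->
    unb (F Ws g i b y).
  have gen : forall L' : seq nat, (forall b, b \in L' -> Bn n b) ->
      exists Y, forall b, b \in L' -> b != a -> forall y, Y <= y ->
      unb (F Ws g i b y).
    elim => [|b L' IH] HL; first by exists 0.
    case: IH => [x hx|Y1 HY1]; first by apply: HL; rewrite in_cons hx orbT.
    case: (eqVneq b a) => [-> | hba].
      exists Y1 => x; rewrite in_cons => /orP [/eqP -> | hx]; first by rewrite eqxx.
      exact: HY1.
    have nA : ~ Aset Ws g i b.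
      move=> hb; move/eqP: hba; apply.
      exact: (Hwa.1 n b a hb Ha (HL b (mem_head _ _)) Han).
    case: (not_all_ex_not _ _ nA) => y0 Hy0.
    have Hu0 : unb (F Ws g i b y0).
      by case: (dich (F_mono_s b y0)).
    exists (maxn Y1 y0) => x; rewrite in_cons => /orP [/eqP -> _ y hy | hx hxa y hy].
      move=> K; case: (Hu0 K) => s hs; exists s; apply: leq_trans hs _.
      apply: F_mono_y; exact: leq_trans (leq_maxr _ _) hy.
    apply: HY1 => //; exact: leq_trans (leq_maxl _ _) hy.
  apply: gen => b; rewrite mem_filter => /andP [] //.
exists l; split => //.
exists Y => y hy.
have E : ev (fun s => find (fun x => all (fun x' =>
      F Ws g i x y s <= F Ws g i x' y s) L) L = find (pred1 a) L).
  apply: (@ev_find_eq _ (fun s x => all (fun x' =>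
      F Ws g i x y s <= F Ws g i x' y s) L)) => x hx.
  case: (eqVneq x a) => [-> | hxa].
    rewrite /= eqxx.
    apply: (@ev_all_true _ (fun s x' => F Ws g i a y s <= F Ws g i x' y s)) => x' hx'.
    case: (eqVneq x' a) => [->|hx'a]; first by exists 0 => s _ /=; exact: leqnn.
    case: (Ha y) => c Hc; exact: C2 Hc (F_mono_s _ _) (HY x' hx' hx'a y hy).
  rewrite /= (negbTE hxa). case: (Ha y) => c Hc.
  apply: ev_mono (C3 (F_mono_s x y) (HY x hx hxa y hy) Hc) => s h.
  by apply/negbTE/allP => /(_ a HaL); rewrite h.
case: E => s1 Hs1; case: (Hl y) => s0 Hs0.
rewrite -(Hs0 (maxn s0 s1) (leq_maxl _ _)) /xmin.
have := Hs1 (maxn s0 s1) (leq_maxr _ _) => /= ->.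
exact: nth_index.
Qed.
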